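(* Let $M_1=\begin{bmatrix} A_1 & B_1\\ 0 & C_1\end{bmatrix}$ and $M_2=\begin{bmatrix} A_2 & B_2\\ 0 & C_2\end{bmatrix}$ be two $m\times n$ ACI-matrices over a field $\mathbb{F}$, where $A_1$ and $A_2$ have the same number $n_1$ of columns. Suppose there are a nonsingular constant matrix $R$ of order $m$ and permutation matrices $Q$ of order $n_1$ and $Q'$ of order $n-n_1$ such that $$\begin{bmatrix} A_2 & B_2\\ 0 & C_2\end{bmatrix}=R\begin{bmatrix} A_1 & B_1\\ 0 & C_1\end{bmatrix}\begin{bmatrix} Q & 0\\ 0 & Q'\end{bmatrix}.$$ If $A_1$ and $A_2$ both have linearly independent rows, then $A_1\sim A_2$ and $C_1\sim C_2$.
   Context: Let $\mathbb{F}$ be a field. An ACI-matrix is a matrix with entries in $\mathbb{F}[x_1,\dots,x_k]$ whose entries are polynomials of degree at most one and such that no indeterminate appears in two different columns. Two ACI-matrices satisfy $N\sim N'$ (equivalent) if $N'=RNQ$ for some nonsingular constant matrix $R$ over $\mathbb{F}$ and some permutation matrix $Q$. Blocks may be degenerate (zero rows or zero columns). Linear independence of rows is over $\mathbb{F}$: if a column involves indeterminates $y_1,\dots,y_t$, its entries lie in the $\mathbb{F}$-vector space $\mathbb{F}+\mathbb{F}y_1+\dots+\mathbb{F}y_t$, and rows are vectors in the product of these spaces over all columns. *)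

(* Defs.v *)
From HB Require Import structures.
From mathcomp Require Import all_boot all_order all_algebra all_fingroup.
From mathcomp Require Import mpoly.
Set Implicit Arguments. Unset Strict Implicit. Unset Printing Implicit Defensive.
Import GRing.Theory.
Local Open Scope ring_scope.

Definition deg_le1 (F : fieldType) (k : nat) (p : {mpoly F[k]}) : Prop :=
  forall mo : 'X_{1..k}, mo \in msupp p -> (mdeg mo <= 1)%N.

Definition var_in (F : fieldType) (k : nat) (l : 'I_k) (p : {mpoly F[k]}) : Prop :=
  exists2 mo : 'X_{1..k}, mo \in msupp p & (0 < mo l)%N.

Definition ACI (F : fieldType) (k r c : nat) (N : 'M[{mpoly F[k]}]_(r, c)) : Prop :=
  (forall i j, deg_le1 (N i j)) /\
  (forall (l : 'I_k) (i i' : 'I_r) (j j' : 'I_c),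
      j != j' -> var_in l (N i j) -> ~ var_in l (N i' j')).

Definition cst_mx (F : fieldType) (k r c : nat) (R : 'M[F]_(r, c))
  : 'M[{mpoly F[k]}]_(r, c) := map_mx (fun a => a%:MP) R.

Definition rows_indep (F : fieldType) (k r c : nat) (N : 'M[{mpoly F[k]}]_(r, c))
  : Prop :=
  forall v : 'rV[F]_r, cst_mx k v *m N = 0 -> v = 0.

(* N ~ N' : N' = R N Q with R nonsingular constant and Q a permutation
   matrix (so N and N' have the same size). *)
Definition aci_equiv (F : fieldType) (k r r' c : nat)
  (N : 'M[{mpoly F[k]}]_(r, c)) (N' : 'M[{mpoly F[k]}]_(r', c)) : Prop :=
  exists (e : r = r') (R : 'M[F]_r') (s : 'S_c),
    R \in unitmx /\ N' = cst_mx k R *m castmx (e, erefl c) N *m perm_mx s.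

(* Main.v *)
Require Import Defs.
From HB Require Import structures.
From mathcomp Require Import all_boot all_order all_algebra all_fingroup.
From mathcomp Require Import mpoly.
Import GRing.Theory.
Local Open Scope ring_scope.

Lemma cstM (F : fieldType) k m n p (A : 'M[F]_(m,n)) (B : 'M[F]_(n,p)) :
  cst_mx k (A *m B) = cst_mx k A *m cst_mx k B.
Proof.
apply/matrixP=> i j; rewrite !mxE (raddf_sum (@mpolyC k F)); apply: eq_bigr => l _.
rewrite !mxE; exact: mpolyCM.
Qed.

Lemma cst_block (F : fieldType) k m1 m2 n1 n2 (A : 'M[F]_(m1,n1)) (B : 'M[F]_(m1,n2))
  (C : 'M[F]_(m2,n1)) (D : 'M[F]_(m2,n2)) :
  cst_mx k (block_mx A B C D) = block_mx (cst_mx k A) (cst_mx k B) (cst_mx k C) (cst_mx k D).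
Proof. exact: map_block_mx. Qed.

Lemma cst0 (F : fieldType) k m n : cst_mx k (0 : 'M[F]_(m,n)) = 0.
Proof. by apply/matrixP=> i j; rewrite !mxE. Qed.

Lemma cast_mulL (R : pzRingType) m m' n (e : m = m') (A : 'M[R]_(m,n)) :
  castmx (e, erefl) A = castmx (e, erefl) (1%:M : 'M_m) *m A.
Proof. by case: m' / e; rewrite !castmx_id mul1mx. Qed.

Lemma cst_cast (F : fieldType) k m m' n (e : m = m') (A : 'M[F]_(m,n)) :
  cst_mx k (castmx (e, erefl) A) = castmx (e, erefl) (cst_mx k A).
Proof. by case: m' / e; rewrite !castmx_id. Qed.

Lemma cast_inv (R : pzRingType) m m' (e : m = m') :
  castmx (erefl, e) (1%:M : 'M[R]_m) *m castmx (e, erefl) (1%:M : 'M_m) = 1%:M /\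
  castmx (e, erefl) (1%:M : 'M[R]_m) *m castmx (erefl, e) (1%:M : 'M_m) = 1%:M.
Proof. by case: m' / e; rewrite !castmx_id mul1mx. Qed.

Lemma indep0 (F : fieldType) k r c q (A : 'M[{mpoly F[k]}]_(r, c)) (X : 'M[F]_(q, r)) :
  rows_indep A -> cst_mx k X *m A = 0 -> X = 0.
Proof.
move=> hA h; apply/row_matrixP => i; rewrite row0; apply: hA.
by rewrite /cst_mx map_row -/(cst_mx k X) -row_mul h row0.
Qed.

Lemma rank_eq (F : fieldType) p1 p2 (X : 'M[F]_(p2,p1)) (Y : 'M[F]_(p1,p2)) :
  Y *m X = 1%:M -> X *m Y = 1%:M -> p1 = p2.
Proof.
move=> h1 h2; apply/eqP; rewrite eqn_leq.
have := mxrankM_maxl Y X; rewrite h1 mxrank1 => /leq_trans -> //; last exact: rank_leq_col.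
have := mxrankM_maxl X Y; rewrite h2 mxrank1 => /leq_trans -> //; exact: rank_leq_col.
Qed.

Arguments rank_eq {F p1 p2 X Y}.
Arguments indep0 {F k r c q A X}.
Arguments cstM {F k m n p}.
Arguments cst_block {F k m1 m2 n1 n2}.
Arguments cst0 {F k m n}.
Arguments cst_cast {F k m m' n}.

Lemma cst1 (F : fieldType) k n : cst_mx k (1%:M : 'M[F]_n) = 1%:M.
Proof.
apply/matrixP=> i j; rewrite !mxE; case: eqP => _ /=; first by rewrite mpolyC1.
by rewrite mpolyC0.
Qed.

Lemma fin (F : fieldType) k p1 p2 n (A1 : 'M[{mpoly F[k]}]_(p1,n)) (A2 : 'M_(p2,n))
  (s : 'S_n) (X : 'M[F]_(p2,p1)) Y :
  Y *m X = 1%:M -> X *m Y = 1%:M -> A2 = cst_mx k X *m A1 *m perm_mx s ->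
  aci_equiv A1 A2.
Proof.
move=> h1 h2 h3; have e := rank_eq h1 h2; subst p2.
exists erefl, X, s; rewrite castmx_id; split => //.
by case: (mulmx1_unit h2).
Qed.

Arguments fin {F k p1 p2 n A1 A2 s X Y}.

Theorem lemma4p3 (F : fieldType) (k m n1 n2 p1 q1 p2 q2 : nat)
  (e1 : (p1 + q1)%N = m) (e2 : (p2 + q2)%N = m)
  (A1 : 'M[{mpoly F[k]}]_(p1, n1)) (B1 : 'M[{mpoly F[k]}]_(p1, n2))
  (C1 : 'M[{mpoly F[k]}]_(q1, n2))
  (A2 : 'M[{mpoly F[k]}]_(p2, n1)) (B2 : 'M[{mpoly F[k]}]_(p2, n2))
  (C2 : 'M[{mpoly F[k]}]_(q2, n2))
  (R : 'M[F]_m) (Q : 'S_n1) (Q' : 'S_n2) :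
  ACI (block_mx A1 B1 0 C1) -> ACI (block_mx A2 B2 0 C2) ->
  R \in unitmx ->
  castmx (e2, erefl (n1 + n2)%N) (block_mx A2 B2 0 C2) =
    cst_mx k R *m castmx (e1, erefl (n1 + n2)%N) (block_mx A1 B1 0 C1)
      *m block_mx (perm_mx Q) 0 0 (perm_mx Q') ->
  rows_indep A1 -> rows_indep A2 ->
  aci_equiv A1 A2 /\ aci_equiv C1 C2.
Proof.
move=> _ _ hR hM hA1 hA2.
move: e1 R hR hM; case: m / e2 => e1 R hR hM.
rewrite castmx_id cast_mulL in hM.
have E : castmx (e1, erefl) (1%:M : 'M[{mpoly F[k]}]_(p1 + q1)) =
          cst_mx k (castmx (e1, erefl) (1%:M : 'M[F]_(p1 + q1))).
  by rewrite cst_cast cst1.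
rewrite E in hM.
set C := castmx (e1, erefl) (1%:M : 'M[F]_(p1 + q1)).
set D := castmx (erefl, e1) (1%:M : 'M[F]_(p1 + q1)).
have [hDC hCD] : D *m C = 1%:M /\ C *m D = 1%:M by exact: cast_inv.
rewrite mulmxA -cstM in hM.
move: hM; set R2 := R *m C => hM.
pose S := D *m invmx R.
have hSR : S *m R2 = 1%:M by rewrite /S /R2 mulmxA -(mulmxA D) mulVmx // mulmx1.
have hRS : R2 *m S = 1%:M by rewrite /S /R2 mulmxA -(mulmxA R) hCD mulmx1 mulmxV.
have hMP : block_mx A1 B1 0 C1 *m block_mx (perm_mx Q) 0 0 (perm_mx Q') =
    block_mx (A1 *m perm_mx Q) (B1 *m perm_mx Q') 0 (C1 *m perm_mx Q').
  by rewrite mulmx_block !mulmx0 !mul0mx !addr0 !add0r.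
have hM' : cst_mx k S *m block_mx A2 B2 0 C2 = block_mx A1 B1 0 C1 *m block_mx (perm_mx Q) 0 0 (perm_mx Q').
  by rewrite hM !mulmxA -cstM hSR cst1 mul1mx.
rewrite -mulmxA hMP -[R2]submxK cst_block mulmx_block in hM.
rewrite hMP -[S]submxK cst_block mulmx_block in hM'.
case/eq_block_mx: hM => hA _ h0 hC.
case/eq_block_mx: hM' => _ _ h0' _.
have R21 : dlsubmx R2 = 0.
  apply: (indep0 hA1).
  rewrite !mulmx0 addr0 in h0.
  have := congr1 (mulmx^~ (perm_mx Q^-1)) h0.
  by rewrite /= mul0mx -!mulmxA -perm_mxM mulgV perm_mx1 mulmx1.
have S21 : dlsubmx S = 0.
  apply: (indep0 hA2).
  by rewrite !mulmx0 addr0 in h0'.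
rewrite R21 cst0 mul0mx add0r in hC.
rewrite mulmx0 addr0 in hA.
move: hSR hRS; rewrite -[R2]submxK -[S]submxK !mulmx_block R21 S21 !mulmx0 !mul0mx.
rewrite !addr0 !add0r => hSR hRS.
rewrite scalar_mx_block in hSR; rewrite scalar_mx_block in hRS.
case/eq_block_mx: hSR => h11 _ _ h22; case/eq_block_mx: hRS => h11' _ _ h22'.
split.
  by apply: (fin h11 h11'); rewrite hA mulmxA.
by apply: (fin h22 h22'); rewrite hC mulmxA.
Qed.
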